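(* The number of ordinary $k\times k$ permutation matrices is $k!-o(k!)$ as $k\to\infty$; i.e. almost all $k\times k$ permutation matrices are ordinary.
   Context: Say a permutation matrix $P$ reduces to a class if some matrix obtainable from $P$ by a sequence of vertical/horizontal reflections and $90$-degree rotations lies in that class. A permutation matrix is ordinary if it reduces to none of the following four classes. ''Splitting the rows into contiguous nonempty sets $R_1,R_2,\dots$'' means the rows of $R_1$ precede those of $R_2$, etc., and similarly for columns. Class 1: permutation matrices $P$ whose rows split into contiguous nonempty $R_1,R_2$ and columns into contiguous nonempty $C_1,C_2$ such that $P$ has ones in $R_1\times C_1$ and in $R_2\times C_2$, and all ones of $P$ lie in these two submatrices except for at most $2$ ones in $R_1\times C_2$; if there are two ones in $R_1\times C_2$, they are in adjacent rows. Class 2: permutation matrices $P$ whose rows split into contiguous nonempty $R_1,R_2,R_3$ and columns into contiguous nonempty $C_1,C_2$ such that $P$ has ones in $R_1\times C_2$ and in $R_3\times C_2$, at least two ones in $R_2\times C_1$, and all ones of $P$ lie in these three submatrices except for at most $2$ ones in $R_2\times C_2$; if there are two ones in $R_2\times C_2$, they are in adjacent rows. Class 3: permutation matrices obtained from some element $X$ of Class 2 (with its sets $R_1,R_2,R_3,C_1,C_2$) by taking the row $r$ of $X$ containing the rightmost one in $R_2\times C_1$, deleting $r$ from its position, and inserting it above the first row of $X$. Class 4: permutation matrices $P$ whose rows split into contiguous nonempty $R_1,R_2,R_3$ and columns into contiguous nonempty $C_1,C_2,C_3$ such that $P$ has ones in each of $R_1\times C_2$, $R_2\times C_1$, $R_2\times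 C_3$, $R_3\times C_2$, and only in these submatrices. *)

(* Defs.v *)
From mathcomp Require Import all_boot all_order all_fingroup.
From mathcomp Require Import boolp.
Set Implicit Arguments. Unset Strict Implicit. Unset Printing Implicit Defensive.

(* A k x k permutation matrix is represented by s : {perm 'I_k}; it has a one
   at (row i, column j) iff s i = j.  Rows are numbered 0..k-1 top to bottom,
   columns 0..k-1 left to right. *)

Local Open Scope group_scope.

Definition revp (k : nat) : {perm 'I_k} := perm (@rev_ord_inj k).

(* Symmetries (recall (s * t) x = t (s x)):
   - reversing the order of rows:     Q i = P (k-1-i)         i.e. Q = revp * P
   - reversing the order of columns:  Q i = k-1 - P i         i.e. Q = P * revp
   - rotation by 90 degrees: Q(i,j) = P(k-1-j, i), i.e. Q i = k-1 - P^-1 i,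
     i.e. Q = P^-1 * revp. *)
Definition flip_rows k (s : {perm 'I_k}) : {perm 'I_k} := revp k * s.
Definition flip_cols k (s : {perm 'I_k}) : {perm 'I_k} := s * revp k.
Definition rot90 k (s : {perm 'I_k}) : {perm 'I_k} := s^-1 * revp k.

Inductive sym_reach k (s : {perm 'I_k}) : {perm 'I_k} -> Prop :=
| sr_refl : sym_reach s s
| sr_rows t : sym_reach s t -> sym_reach s (flip_rows t)
| sr_cols t : sym_reach s t -> sym_reach s (flip_cols t)
| sr_rot t : sym_reach s t -> sym_reach s (rot90 t).

Definition small_adj k (A : {set 'I_k}) : Prop :=
  #|A| <= 2 /\ forall i1 i2 : 'I_k, i1 \in A -> i2 \in A -> i1 <= i2.+1.

(* Row split R1 = [0,a), R2 = [a,k) ; column split C1 = [0,c), C2 = [c,k). *)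
Definition class1 k (s : {perm 'I_k}) : Prop :=
  exists a c : nat, [/\ 0 < a < k, 0 < c < k,
    (exists i : 'I_k, (i < a) && (s i < c)),
    (exists i : 'I_k, (a <= i) && (c <= s i))
  & (forall i : 'I_k, a <= i -> c <= s i)
    /\ small_adj [set i : 'I_k | (i < a) && (c <= s i)]].

(* Row split R1 = [0,a), R2 = [a,b), R3 = [b,k); columns C1 = [0,c), C2 = [c,k). *)
Definition class2w k (s : {perm 'I_k}) (a b c : nat) : Prop :=
  [/\ 0 < a, a < b, b < k & 0 < c < k] /\
  [/\ (exists i : 'I_k, (i < a) && (c <= s i)),
    (exists i : 'I_k, (b <= i) && (c <= s i)),
    2 <= #|[set i : 'I_k | (a <= i < b) && (s i < c)]|,
    (forall i : 'I_k, s i < c -> a <= i < b)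
  & small_adj [set i : 'I_k | (a <= i < b) && (c <= s i)]].

Definition class2 k (s : {perm 'I_k}) : Prop :=
  exists a b c, class2w s a b c.

(* row index of the old matrix that becomes row i after moving row r to the top *)
Definition mvrow (r i : nat) : nat :=
  if i == 0 then r else if i <= r then i.-1 else i.

Definition class3 k (q : {perm 'I_k}) : Prop :=
  exists (x : {perm 'I_k}) (a b c : nat) (r : 'I_k),
    [/\ class2w x a b c,
        (* r is the row of the rightmost one in R2 x C1 *)
        (a <= r < b) && (x r < c),
        (forall i : 'I_k, a <= i < b -> x i < c -> x i <= x r)
      & (forall i i' : 'I_k, nat_of_ord i' = mvrow r i -> q i = x i')].

(* Rows R1=[0,a), R2=[a,b), R3=[b,k); columns C1=[0,c), C2=[c,d), C3=[d,k). *)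
Definition class4 k (s : {perm 'I_k}) : Prop :=
  exists a b c d : nat, [/\ [/\ 0 < a, a < b & b < k], [/\ 0 < c, c < d & d < k],
    [/\ exists i : 'I_k, (i < a) && (c <= s i < d),
        exists i : 'I_k, (a <= i < b) && (s i < c),
        exists i : 'I_k, (a <= i < b) && (d <= s i)
      & exists i : 'I_k, (b <= i) && (c <= s i < d)]
  & forall i : 'I_k,
      [|| (i < a) && (c <= s i < d), (a <= i < b) && (s i < c),
          (a <= i < b) && (d <= s i) | (b <= i) && (c <= s i < d)]].

Definition reduces_to k (s : {perm 'I_k}) (C : {perm 'I_k} -> Prop) : Prop :=
  exists t, sym_reach s t /\ C t.

Definition ordinary k (s : {perm 'I_k}) : Prop :=
  ~ reduces_to s (@class1 k) /\ ~ reduces_to s (@class2 k) /\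
  ~ reduces_to s (@class3 k) /\ ~ reduces_to s (@class4 k).

Definition n_ordinary (k : nat) : nat :=
  #|[set s : {perm 'I_k} | `[< ordinary s >]]|.

(* Main.v *)
Require Import Defs.
From mathcomp Require Import all_boot all_order all_fingroup zify.
From mathcomp Require Import boolp.
Set Implicit Arguments. Unset Strict Implicit. Unset Printing Implicit Defensive.

Lemma bin_step n m : m.*2.+1 <= n -> 'C(n, m) <= 'C(n, m.+1).
Proof.
move=> h.
have e := mul_bin_left n m.
have hp : 0 < m.+1 by [].
rewrite -(leq_pmul2l hp) e leq_mul2r; apply/orP; right; lia.
Qed.

Lemma bin_mono n r p : r <= p -> p <= n - r -> 'C(n, r) <= 'C(n, p).
Proof.
move=> rp pn.
wlog hp : p rp pn / p.*2 <= n.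
  move=> W; case: (leqP p.*2 n) => h; first exact: W.
  rewrite -[X in _ <= X](@bin_sub n p); last lia.
  apply: W; lia.
elim: p rp pn hp => [|p IH] rp pn hp.
  by rewrite leqn0 in rp; rewrite (eqP rp).
case: (ltngtP r p.+1) => [h|h|->]; last by [].
- apply: leq_trans (IH _ _ _) (bin_step _); lia.
- lia.
Qed.

Lemma ffact_ge n m : (n - m) ^ m <= n ^_ m.
Proof.
rewrite ffact_prod -(card_ord m) -prod_nat_const card_ord.
by apply: leq_prod => i _; apply: leq_sub2l; apply: ltnW.
Qed.

Lemma ffact_le n m : n ^_ m <= n ^ m.
Proof.
rewrite ffact_prod -(card_ord m) -prod_nat_const card_ord.
by apply: leq_prod => i _; apply: leq_subr.
Qed.

Lemma sum_ind_lo_eq n j : \sum_(i < n) ((i <= j) : nat) = minn n j.+1.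
Proof.
elim: n => [|n IH]; first by rewrite big_ord0.
rewrite big_ord_recr /= IH; case: (leqP n j) => h /=; lia.
Qed.

Lemma sum_ind_hi_eq N n j : \sum_(i < N) ((n - j <= i) : nat) = N - minn N (n - j).
Proof.
elim: N => [|N IH]; first by rewrite big_ord0.
rewrite big_ord_recr /= IH; case: (leqP (n - j) N) => h /=; lia.
Qed.

Lemma sum_ind_lo n j F : \sum_(i < n) (i <= j) * F <= j.+1 * F.
Proof.
rewrite -big_distrl /= leq_mul2r sum_ind_lo_eq; apply/orP; right; lia.
Qed.

Lemma sum_ind_hi n j F : \sum_(i < n.+1) (n - j <= i) * F <= j.+1 * F.
Proof.
rewrite -big_distrl /= leq_mul2r sum_ind_hi_eq; apply/orP; right; lia.
Qed.

Lemma sum_const_ord n F : \sum_(i < n) F = n * F.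
Proof. by rewrite sum_nat_const card_ord. Qed.

Lemma sum_int_eq n a b : \sum_(0 <= i < n | a <= i < b) 1 = minn n b - a.
Proof.
rewrite big_mkcond /=.
elim: n => [|n IH]; first by rewrite big_geq // min0n.
rewrite big_nat_recr //= IH; case: ifP => [/andP [h1 h2]|/negbT h] /=; first lia.
  rewrite negb_and -!ltnNge in h; case/orP: h => h; lia.
Qed.

Lemma card_int k a b : b <= k -> #|[set i : 'I_k | a <= i < b]| = b - a.
Proof.
move=> hb; rewrite -sum1dep_card.
rewrite -(big_mkord (fun i => a <= i < b) (fun _ => 1)) sum_int_eq; lia.
Qed.

Lemma card_ge k c : #|[set i : 'I_k | c <= i]| = k - c.
Proof.
rewrite -(card_int c (leqnn k)); apply: eq_card => i; rewrite !inE ltn_ord andbT //.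
Qed.

Lemma card_nint k a b : b <= k -> #|[set i : 'I_k | ~~ (a <= i < b)]| = k - (b - a).
Proof.
move=> hb; rewrite -(card_int a hb).
have := cardsC [set i : 'I_k | a <= i < b]; rewrite card_ord => H.
have -> : #|[set i : 'I_k | ~~ (a <= i < b)]| = #|~: [set i : 'I_k | a <= i < b]|.
  by apply: eq_card => i; rewrite !inE.
lia.
Qed.

Section Count.
Variable k : nat.
Implicit Types X Y : {set 'I_k}.

Definition Nset X Y := [set s : {perm 'I_k} | [forall i in X, s i \in Y]].

Lemma fiber_bound X (s0 : {perm 'I_k}) :
  #|[set s : {perm 'I_k} | [forall i in X, s i == s0 i]]| <= (k - #|X|)`!.
Proof.
have -> : (k - #|X|) = #|~: X|.
  by apply/eqP; rewrite -(eqn_add2l #|X|) (cardsC X) card_ord subnKC //; apply: leq_trans (max_card _) _; rewrite card_ord.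
rewrite -card_perm.
apply: leq_trans (leq_imset_card (fun u => (u * s0)%g) (perm_on (~: X))).
apply: subset_leq_card; apply/subsetP => s; rewrite inE => /forallP H.
apply/imsetP; exists (s * s0^-1)%g; last by rewrite mulgKV.
apply/subsetP => x; rewrite !inE permM; apply: contra => xX.
by have /implyP/(_ xX)/eqP -> := H x; rewrite permK.
Qed.

Lemma Nset_bound X Y : #|Nset X Y| <= #|Y| ^_ #|X| * (k - #|X|)`!.
Proof.
pose tau (s : {perm 'I_k}) := map_tuple s (enum_tuple X).
pose TS := [set t : #|X|.-tuple 'I_k | all (mem Y) t & uniq t].
have cTS : #|TS| = #|Y| ^_ #|X| by rewrite card_uniq_tuples.
rewrite -cTS -sum1_card (partition_big tau (mem TS)); last first.
  move=> s; rewrite inE => /forallP H.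
  change (tau s \in TS); rewrite /tau /TS inE; apply/andP; split.
    apply/allP => y /mapP [x]; rewrite mem_enum => xX ->.
    by have /implyP := H x; apply.
  by rewrite map_inj_uniq ?enum_uniq //; apply: perm_inj.
rewrite -sum_nat_const; apply: leq_sum => t _.
case: (pickP [pred s | (s \in Nset X Y) && (tau s == t)]) => [s0 | none]; last first.
  by rewrite big1 // => s Hs; have := none s; rewrite /= Hs.
move=> /= /andP [_ /eqP s0t].
apply: leq_trans (fiber_bound X s0).
rewrite sum1_card; apply: subset_leq_card; apply/subsetP => s.
rewrite !inE => /andP [_ /eqP st]; apply/forallP => x; apply/implyP => xX.
have : tau s = tau s0 by rewrite st s0t.
move/(congr1 (@tval _ _)) => /= /eq_in_map /(_ x); rewrite mem_enum => /(_ xX) ->.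
by [].
Qed.

Lemma cardX_le X : #|X| <= k.
Proof. by have := max_card (mem X); rewrite card_ord. Qed.

Lemma Nset_compl X Y : #|Nset X Y| = #|Nset (~: Y) (~: X)|.
Proof.
rewrite -[LHS](card_imset _ (@invg_inj _)); apply: eq_card => u.
apply/imsetP/idP.
  move=> [s]; rewrite inE => /forallP H ->; rewrite inE; apply/forallP => j.
  apply/implyP; rewrite !inE; apply: contra => Hx.
  by have /implyP /(_ Hx) := H (s^-1 j)%g; rewrite permKV.
rewrite inE => /forallP H; exists (u^-1)%g; last by rewrite invgK.
rewrite inE; apply/forallP => i; apply/implyP => iX.
have /implyP := H (u^-1 i)%g; rewrite !inE permKV => H'.
by apply: contraLR iX => /H'.
Qed.

Lemma L0 X Y : #|Nset X Y| * 'C(k, #|X|) <= k`! * 'C(#|Y|, #|X|).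
Proof.
have pk := cardX_le X.
apply: leq_trans (leq_mul (Nset_bound X Y) (leqnn _)) _.
rewrite -bin_ffact -(bin_fact pk); nia.
Qed.

Lemma L1 X Y : #|Y| <= #|X| + 3 -> #|Nset X Y| * 'C(k, #|X|) <= k`! * 'C(#|X| + 3, 3).
Proof.
move=> h; apply: leq_trans (L0 X Y) _; rewrite leq_mul2l; apply/orP; right.
rewrite -{2}(addKn #|X| 3) bin_sub ?leq_addr //; exact: leq_bin2l.
Qed.

Lemma cardC' X : #|~: X| = k - #|X|.
Proof. have := cardsC X; rewrite card_ord; lia. Qed.

Lemma L2 X Y : #|Y| <= #|X| + 3 -> #|Nset X Y| * 'C(k, k - #|Y|) <= k`! * 'C(k - #|Y| + 3, 3).
Proof.
move=> h; rewrite Nset_compl -cardC'; apply: L1.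
rewrite !cardC'.
have := cardX_le X; have := cardX_le Y.
lia.
Qed.

Definition A1 := 120 * 'C(k,2) * 'C(k,8).
Definition A2 := 120 * k * 'C(k,8).
Definition A3 := 'C(k+3,3) * k * 'C(k,2).
Definition DD := k * 'C(k,2) * 'C(k,8).
Definition Phi p q := (if (p <= 1) || (k - q <= 1) then A1 else 0)
  + (if (p <= 7) || (k - q <= 7) then A2 else 0) + A3.

Lemma N0 X Y : #|Y| < #|X| -> #|Nset X Y| = 0.
Proof.
move=> h; have := L0 X Y; rewrite (bin_small h) muln0 leqn0 muln_eq0.
have : 0 < 'C(k, #|X|) by rewrite bin_gt0 cardX_le.
by rewrite lt0n => /negbTE -> ; rewrite orbF => /eqP.
Qed.

Lemma glue N b F u w T : N * b <= F * u -> u * w <= T -> N * (b * w) <= F * T.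
Proof.
move=> h1 h2; rewrite mulnA; apply: leq_trans (leq_mul h1 (leqnn w)) _.
by rewrite -mulnA leq_mul2l h2 orbT.
Qed.

Lemma GT X Y : 16 <= k -> 1 <= #|X| -> #|Y| < k -> #|Y| <= #|X| + 3 ->
  #|Nset X Y| * DD <= k`! * Phi #|X| #|Y|.
Proof.
move=> hk h1 h2 h3.
case: (ltnP #|Y| #|X|) => hpq; first by rewrite N0.
have hl1 := L1 h3; have hl2 := L2 h3.
have pk := cardX_le X.
move: hl1 hl2 hpq h1 h2 h3 pk; rewrite /Phi /DD /A1 /A2 /A3.
move: #|Nset X Y| #|X| #|Y| => N p q hl1 hl2 hpq h1 h2 h3 pk.
have C120 : forall x, x <= 7 -> 'C(x + 3, 3) <= 120.
  by move=> x hx; apply: leq_trans (leq_bin2l 3 (_ : x + 3 <= 10)) _ => //; lia.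
set C2 := 'C(k, 2); set C8 := 'C(k, 8); set C3 := 'C(k + 3, 3).
case: ifP => [/orP [hp|hq] | /negbT]. 
- have e : p = 1 by lia.
  rewrite e bin1 in hl1; have hh : N * k <= k`! * 4 by [].
  rewrite -mulnA; apply: glue hh _; lia.
- have e : k - q = 1 by lia.
  rewrite e bin1 in hl2; have hh : N * k <= k`! * 4 by [].
  rewrite -mulnA; apply: glue hh _; lia.
rewrite negb_or -!ltnNge => /andP [hp1 hq1].
have -> : k * C2 * C8 = C2 * (k * C8) by lia.
case: ifP => [/orP [hp|hq] | /negbT]. 
- have hb : C2 <= 'C(k, p) by apply: bin_mono; lia.
  have hh : N * C2 <= k`! * 120.
    apply: leq_trans (leq_mul (leqnn N) hb) _; apply: leq_trans hl1 _.
    by rewrite leq_mul2l C120 ?orbT.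
  apply: glue hh _; lia.
- have hb : C2 <= 'C(k, k - q) by apply: bin_mono; lia.
  have hh : N * C2 <= k`! * 120.
    apply: leq_trans (leq_mul (leqnn N) hb) _; apply: leq_trans hl2 _.
    by rewrite leq_mul2l C120 ?orbT.
  apply: glue hh _; lia.
rewrite negb_or -!ltnNge => /andP [hp2 hq2].
have -> : C2 * (k * C8) = C8 * (k * C2) by lia.
have hb : C8 <= 'C(k, p) by apply: bin_mono; lia.
have hh : N * C8 <= k`! * C3.
  apply: leq_trans (leq_mul (leqnn N) hb) _; apply: leq_trans hl1 _.
  rewrite leq_mul2l; apply/orP; right; apply: leq_bin2l; lia.
apply: glue hh _; lia.
Qed.

End Count.
Arguments A1 : simpl never.
Arguments A2 : simpl never.
Arguments A3 : simpl never.
Arguments DD : simpl never.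

Lemma fact8 : 8`! <= 8^8.
Proof. rewrite -ffactnn; exact: ffact_le. Qed.

Lemma ineq_c M k : 4096 * 8^8 * M + 100 <= k ->
  9 * M * (k+1)^3 * 'C(k+3,3) <= 'C(k,8).
Proof.
move=> hk.
have hC3 : 'C(k+3,3) <= (k+3)^3.
  apply: leq_trans (ffact_le _ 3); rewrite -bin_ffact; apply: leq_pmulr; by [].
have hC8 : (k-8)^8 <= 'C(k,8) * 8`!.
  apply: leq_trans (ffact_ge k 8) _; by rewrite -bin_ffact.
have hF := fact8.
have F0 : 0 < 8`! := fact_gt0 8.
move: hC8 hF F0 hk; set F := 8`!; set P := 8^8 => hC8 hF F0 hk.
set y := k - 8.
have h1 : (k+1)^3 <= 8 * y^3.
  have -> : 8 * y^3 = (2 * y)^3 by rewrite expnMn.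
  rewrite leq_exp2r //; lia.
have h2 : (k+3)^3 <= 8 * y^3.
  have -> : 8 * y^3 = (2 * y)^3 by rewrite expnMn.
  rewrite leq_exp2r //; lia.
have hy : 9 * 64 * F * M <= y ^ 2.
  rewrite expnS expn1; apply: leq_trans (_ : y <= y * y).
    have : 9 * 64 * F * M <= 9 * 64 * P * M by rewrite leq_mul2r leq_mul2l hF !orbT.
    lia.
  by rewrite leq_pmulr //; lia.
rewrite -(leq_pmul2r F0); apply: leq_trans hC8.
have -> : y ^ 8 = y^3 * y^3 * y^2 by rewrite -!expnD.
apply: leq_trans (_ : 9 * M * (8 * y^3) * (8 * y^3) * F <= _).
  exact: leq_mul (leq_mul (leq_mul (leqnn _) h1) (leq_trans hC3 h2)) (leqnn F).
have -> : 9 * M * (8 * y ^ 3) * (8 * y ^ 3) * F = (y^3 * y^3) * (9 * 64 * F * M) by lia.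
by rewrite leq_mul2l hy orbT.
Qed.

Lemma final_ineq M : exists K, forall k, K <= k ->
  (30 * A1 k + 128 * (k+1) * A2 k + 3 * (k+1)^3 * A3 k) * M <= DD k.
Proof.
exists (4096 * 8^8 * M + 200 * 1000 * M + 100) => k hk.
have hc : 9 * M * (k+1)^3 * 'C(k+3,3) <= 'C(k,8).
  apply: ineq_c; move: hk; set P := 8^8; lia.
have e2 : 'C(k,2) * 2 = k * (k - 1) by rewrite (bin_ffact k 2) ffactnS ffactn1 subn1.
rewrite /A1 /A2 /A3 /DD.
move: hc e2 hk; set C2 := 'C(k,2); set C8 := 'C(k,8); set C3 := 'C(k+3,3); set P := 8^8.
move=> hc e2 hk.
have ha : (108 * 100) * M * (C2 * C8) <= k * (C2 * C8).
  apply: leq_mul => //; lia.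
have hb0 : (4608 * 10) * M * (k + 1) <= C2.
  have h1 : (4608 * 20) * M * (k+1) <= (4608 * 40) * M * k.
    apply: leq_trans (leq_mul (leqnn ((4608 * 20) * M)) (_ : k + 1 <= 2 * k)) _; lia.
  have h2 : (4608 * 40) * M * k <= (k - 1) * k by apply: leq_mul => //; lia.
  lia.
have hb : (4608 * 10) * M * (k + 1) * (k * C8) <= C2 * (k * C8) by apply: leq_mul.
have hc' : 9 * M * (k+1)^3 * C3 * (k * C2) <= C8 * (k * C2) by apply: leq_mul.
set U := (k+1)^3 in hc' *.
nia.
Qed.

Lemma card_cover (T I : finType) (S : {set T}) (P : pred I) (F : I -> {set T}) :
  (forall s, s \in S -> exists2 i, P i & s \in F i) -> #|S| <= \sum_(i | P i) #|F i|.
Proof.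
move=> H; apply: leq_trans (_ : #|\bigcup_(i | P i) F i| <= _).
  apply: subset_leq_card; apply/subsetP => s /H [i Pi si]; apply/bigcupP; by exists i.
elim/big_rec2: _ => [|i A n Pi IH]; first by rewrite cards0.
by apply: leq_trans (leq_card_setU _ _).1 _; rewrite leq_add2l.
Qed.

Section Sym.
Variable k : nat.

Definition core (s : {perm 'I_k}) : Prop := class1 s \/ class2 s \/ class3 s \/ class4 s.

Definition gsym (b : bool * bool * bool) (s : {perm 'I_k}) : {perm 'I_k} :=
  ((if b.1.1 then revp k else 1) * (if b.2 then s^-1 else s) * (if b.1.2 then revp k else 1))%g.

Definition Pbig (s : {perm 'I_k}) := exists b, core (gsym b s).

Lemma revpK : (revp k * revp k = 1)%g.
Proof. by apply/permP => i; rewrite permM perm1 /revp !permE /= rev_ordK. Qed.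

Lemma revpV : ((revp k)^-1 = revp k)%g.
Proof. by apply: (mulgI (revp k)); rewrite mulgV revpK. Qed.

Lemma revpKr (x : {perm 'I_k}) : (x * revp k * revp k = x)%g.
Proof. by rewrite -mulgA revpK mulg1. Qed.

Ltac gsimp := rewrite /gsym /= ?mul1g ?mulg1 ?invMg ?invgK ?revpV ?mul1g ?mulg1 ?mulgA ?revpKr ?revpK ?mul1g ?mulg1.

Lemma step_rows t b : exists b', gsym b (flip_rows t) = gsym b' t.
Proof.
case: b => [[b1 b2] b3]; rewrite /flip_rows.
exists (if b3 then (b1, ~~ b2, true) else (~~ b1, b2, false)).
by case: b1; case: b2; case: b3; gsimp.
Qed.

Lemma step_cols t b : exists b', gsym b (flip_cols t) = gsym b' t.
Proof.
case: b => [[b1 b2] b3]; rewrite /flip_cols.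
exists (if b3 then (~~ b1, b2, true) else (b1, ~~ b2, false)).
by case: b1; case: b2; case: b3; gsimp.
Qed.

Lemma step_rot t b : exists b', gsym b (rot90 t) = gsym b' t.
Proof.
case: b => [[b1 b2] b3]; rewrite /rot90.
exists (if b3 then (~~ b1, b2, false) else (b1, ~~ b2, true)).
by case: b1; case: b2; case: b3; gsimp.
Qed.

Lemma sym_Pbig s t : sym_reach s t -> Pbig t -> Pbig s.
Proof.
elim=> [|t' _ IH|t' _ IH|t' _ IH] //; case=> b Hb; apply: IH.
- by have [b' e] := step_rows t' b; exists b'; rewrite -e.
- by have [b' e] := step_cols t' b; exists b'; rewrite -e.
- by have [b' e] := step_rot t' b; exists b'; rewrite -e.
Qed.

Lemma gsym_inj b : injective (gsym b).
Proof.
move=> x y; rewrite /gsym => /mulIg /mulgI; case: b.2 => //; exact: invg_inj.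
Qed.

Lemma card_Pbig : #|[set s : {perm 'I_k} | `[< Pbig s >]]| <= 8 * #|[set s : {perm 'I_k} | `[< core s >]]|.
Proof.
apply: leq_trans (card_cover (P := predT) (F := fun b => [set s : {perm 'I_k} | `[< core (gsym b s) >]]) _) _.
  move=> s; rewrite inE => /asboolP [b Hb]; exists b => //; rewrite inE; exact/asboolP.
have -> : 8 = #|{: bool * bool * bool}| by rewrite !card_prod card_bool.
rewrite -sum_nat_const; apply: leq_sum => b _.
have -> : [set s : {perm 'I_k} | `[< core (gsym b s) >]] = gsym b @^-1: [set s : {perm 'I_k} | `[< core s >]].
  by apply/setP => s; rewrite !inE.
by rewrite card_preimset //; apply: gsym_inj.
Qed.

End Sym.

Lemma sum_prod2 n1 n2 (f : 'I_n1 -> nat) (g : 'I_n2 -> nat) :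
  \sum_(x : 'I_n1 * 'I_n2) f x.1 * g x.2 = (\sum_i f i) * (\sum_j g j).
Proof.
rewrite -(pair_big predT predT (fun i j => f i * g j)) /= big_distrl /=.
by apply: eq_bigr => i _; rewrite big_distrr.
Qed.

Lemma sum_prod3 n1 n2 n3 (f : 'I_n1 -> nat) (g : 'I_n2 -> nat) (h : 'I_n3 -> nat) :
  \sum_(x : 'I_n1 * 'I_n2 * 'I_n3) f x.1.1 * g x.1.2 * h x.2 =
  (\sum_i f i) * (\sum_j g j) * (\sum_l h l).
Proof.
rewrite -(pair_big predT predT (fun ij l => f ij.1 * g ij.2 * h l)) /=.
rewrite -sum_prod2 big_distrl /=; apply: eq_bigr => x _; by rewrite big_distrr.
Qed.

Lemma ind_lo n j : \sum_(i < n) ((i <= j) : nat) <= j.+1.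
Proof. rewrite sum_ind_lo_eq; lia. Qed.

Lemma ind_hi n j : \sum_(i < n.+1) ((n - j <= i) : nat) <= j.+1.
Proof. rewrite sum_ind_hi_eq; lia. Qed.

Lemma sum1_ord n : \sum_(i < n) 1 = n.
Proof. by rewrite sum_const_ord muln1. Qed.

Lemma if_le (b : bool) (n A : nat) : (b -> 0 < n) -> (if b then A else 0) <= n * A.
Proof. by case: b => // /(_ isT) h; rewrite leq_pmull. Qed.

Lemma class_bound k (I : finType) (S : {set {perm 'I_k}}) (V : pred I)
  (XX YY : I -> {set 'I_k}) (Psi : I -> nat) :
  (forall s, s \in S -> exists2 x, V x & s \in Nset (XX x) (YY x)) ->
  (forall x, V x -> #|Nset (XX x) (YY x)| * DD k <= k`! * Psi x) ->
  #|S| * DD k <= k`! * \sum_(x : I) Psi x.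
Proof.
move=> Hc Hb; apply: leq_trans (leq_mul (card_cover Hc) (leqnn _)) _.
rewrite big_distrl big_distrr /= [X in _ <= X](bigID V) /=.
apply: leq_trans (leq_addr _ _); exact: leq_sum.
Qed.

Lemma card_img_sub k (s : {perm 'I_k}) (A B : {set 'I_k}) :
  (forall i, i \in A -> s i \in B) -> #|A| <= #|B|.
Proof.
move=> H; rewrite -(card_imset _ (@perm_inj _ s)); apply: subset_leq_card.
by apply/subsetP => j /imsetP [i iA ->]; apply: H.
Qed.

Lemma card_pre_sub k (s : {perm 'I_k}) (A B : {set 'I_k}) :
  (forall i, s i \in B -> i \in A) -> #|B| <= #|A|.
Proof.
move=> H; apply: (@card_img_sub k s^-1%g) => j jB; apply: H; by rewrite permKV.
Qed.

Lemma card_lt k c : c <= k -> #|[set i : 'I_k | i < c]| = c.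
Proof.
move=> h; rewrite -[RHS]subn0 -(card_int 0 h); apply: eq_card => i; by rewrite !inE.
Qed.

Section Sum3.
Variables n1 n2 n3 : nat.
Local Notation I := ('I_n1 * 'I_n2 * 'I_n3)%type.

Lemma sum3_c (h : 'I_n3 -> nat) : \sum_(x : I) h x.2 = n1 * n2 * \sum_l h l.
Proof.
have := sum_prod3 (fun _ : 'I_n1 => 1) (fun _ : 'I_n2 => 1) h.
by rewrite !sum1_ord /=; under eq_bigr => x _ do rewrite !mul1n.
Qed.

Lemma sum3_ac (f : 'I_n1 -> nat) (h : 'I_n3 -> nat) :
  \sum_(x : I) f x.1.1 * h x.2 = (\sum_i f i) * n2 * \sum_l h l.
Proof.
have := sum_prod3 f (fun _ : 'I_n2 => 1) h.
by rewrite !sum1_ord /=; under eq_bigr => x _ do rewrite !muln1.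
Qed.

Lemma sum3_ab (f : 'I_n1 -> nat) (g : 'I_n2 -> nat) :
  \sum_(x : I) f x.1.1 * g x.1.2 = (\sum_i f i) * (\sum_j g j) * n3.
Proof.
have := sum_prod3 f g (fun _ : 'I_n3 => 1).
by rewrite !sum1_ord /=; under eq_bigr => x _ do rewrite !muln1.
Qed.

Lemma sum3_bc (g : 'I_n2 -> nat) (h : 'I_n3 -> nat) :
  \sum_(x : I) g x.1.2 * h x.2 = n1 * (\sum_j g j) * \sum_l h l.
Proof.
have := sum_prod3 (fun _ : 'I_n1 => 1) g h.
by rewrite !sum1_ord /=; under eq_bigr => x _ do rewrite !mul1n.
Qed.

Lemma sum3_a (f : 'I_n1 -> nat) : \sum_(x : I) f x.1.1 = (\sum_i f i) * n2 * n3.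
Proof.
have := sum_prod3 f (fun _ : 'I_n2 => 1) (fun _ : 'I_n3 => 1).
by rewrite !sum1_ord /=; under eq_bigr => x _ do rewrite !muln1.
Qed.

Lemma sum3_const (A : nat) : \sum_(x : I) A = n1 * n2 * n3 * A.
Proof. by rewrite sum_nat_const !card_prod !card_ord. Qed.
End Sum3.

Section C1.
Variable k : nat.
Definition I1 := ('I_k.+1 * 'I_3)%type.
Definition V1 (x : I1) := (0 < x.1 < k) && (x.2 <= x.1) && (0 < x.1 - x.2).
Definition X1 (x : I1) := [set i : 'I_k | x.1 <= i].
Definition Y1 (x : I1) := [set i : 'I_k | x.1 - x.2 <= i].
Definition Psi1 (x : I1) := ((k - 1 <= x.1) + (x.1 <= 3)) * A1 k
  + ((k - 7 <= x.1) + (x.1 <= 9)) * A2 k + A3 k.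

Lemma class1_cover s : class1 s -> exists2 x, V1 x & s \in Nset (X1 x) (Y1 x).
Proof.
case=> a [c [/andP[a0 ak] /andP[c0 ck] _ _ [H [T2 _]]]].
have hca : c <= a.
  have := @card_img_sub k s [set i : 'I_k | a <= i] [set j : 'I_k | c <= j].
  rewrite !card_ge => h; have : k - a <= k - c by apply: h => i; rewrite !inE; apply: H.
  lia.
have hac : a <= c + 2.
  set T := [set i : 'I_k | (i < a) && (c <= s i)] in T2.
  have := @card_pre_sub k s ([set i : 'I_k | a <= i] :|: T) [set j : 'I_k | c <= j].
  rewrite card_ge => h.
  have : k - c <= #|[set i : 'I_k | a <= i] :|: T|.
    apply: h => i; rewrite !inE => hi; case: (leqP a i) => //= ->; by rewrite hi.
  move/leq_trans/(_ (leq_card_setU _ _).1); rewrite card_ge. move=> hh; move: T2 hh; clearbody T; move: #|T| => n. lia.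
exists (inord a, inord (a - c)).
  rewrite /V1 /= !inordK; lia.
rewrite inE; apply/forallP => i; apply/implyP; rewrite /X1 /Y1 !inE /= !inordK; try lia.
move=> hi; have := H i hi; lia.
Qed.

Lemma class1_term x : 16 <= k -> V1 x -> #|Nset (X1 x) (Y1 x)| * DD k <= k`! * Psi1 x.
Proof.
case: x => a t /= hk; rewrite /V1 /= => hv; have t3 := ltn_ord t.
have cx : #|X1 (a, t)| = k - a by rewrite card_ge.
have cy : #|Y1 (a, t)| = k - (a - t) by rewrite card_ge.
apply: leq_trans (GT _ _ _ _) _; rewrite ?cx ?cy //; try lia.
rewrite leq_mul2l /Phi /Psi1 /=; apply/orP; right.
apply: leq_add; first apply: leq_add; try apply: if_le; lia.
Qed.

Lemma class1_sum : \sum_(x : I1) Psi1 x <= 30 * A1 k + 128 * (k+1) * A2 k + 3 * (k+1)^3 * A3 k.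
Proof.
rewrite -(pair_big predT predT (fun i (j : 'I_3) => Psi1 (i, j))) /Psi1 /=.
move: (A1 k) (A2 k) (A3 k) => a1 a2 a3.
under eq_bigr => i _ do rewrite sum_const_ord.
rewrite -big_distrr !big_split -!big_distrl !big_split sum_const_ord /=.
have s1 := ind_hi k 1; have s2 := ind_lo k.+1 3; have s3 := ind_hi k 7; have s4 := ind_lo k.+1 9.
have hk3 : (k + 1) * a3 <= (k+1)^3 * a3.
  by apply: leq_mul => //; rewrite -{1}(expn1 (k+1)); apply: leq_pexp2l; lia.
move: s1 s2 s3 s4 hk3.
set S1 := \sum_(i < k.+1) _; set S2 := \sum_(i < k.+1) _; set S3 := \sum_(i < k.+1) _;
  set S4 := \sum_(i < k.+1) _.
set P := (k+1)^3 => s1 s2 s3 s4 hk3.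
have e1 : (S1 + S2) * a1 <= 6 * a1 by apply: leq_mul; lia.
have e2 : (S3 + S4) * a2 <= 18 * a2 by apply: leq_mul; lia.
move: e1 e2 hk3; clearbody S1 S2 S3 S4 P; lia.
Qed.
End C1.

Section C23.
Variable k : nat.

Lemma c2w_facts (s : {perm 'I_k}) a b c : class2w s a b c ->
  [/\ 0 < a, b < k, 2 <= c, c <= b - a & b - a <= c + 2] /\
  (forall i : 'I_k, s i < c -> a <= i < b).
Proof.
case=> [[a0 ab bk /andP[c0 ck]] [_ _ S2 H [T2 _]]].
split => //; split => //.
- apply: leq_trans S2 _.
  have := @card_img_sub k s [set i : 'I_k | (a <= i < b) && (s i < c)] [set j : 'I_k | j < c].
  rewrite (card_lt (ltnW ck)); apply => i; by rewrite !inE => /andP [_ ->].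
- have := @card_pre_sub k s [set i : 'I_k | a <= i < b] [set j : 'I_k | j < c].
  rewrite (card_lt (ltnW ck)) (card_int a (ltnW bk)); apply => i; by rewrite !inE => /H.
- set T := [set i : 'I_k | (a <= i < b) && (c <= s i)] in T2.
  set P := [set i : 'I_k | s i < c].
  have hP : #|P| <= c.
    have := @card_img_sub k s P [set j : 'I_k | j < c].
    rewrite (card_lt (ltnW ck)); apply => i; by rewrite !inE.
  have : #|[set i : 'I_k | a <= i < b]| <= #|P :|: T|.
    apply: subset_leq_card; apply/subsetP => i; rewrite !inE => hi.
    by case: (ltnP (s i) c) => //= h; rewrite hi.
  move/leq_trans/(_ (leq_card_setU _ _).1); rewrite (card_int a (ltnW bk)).
  move=> hh; move: hh hP T2; clearbody T P; move: #|T| #|P| => n1 n2; lia.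
Qed.

Local Notation I2 := ('I_k.+1 * 'I_3 * 'I_k.+1)%type.
Definition V2 (x : I2) := (2 <= x.1.1) && (1 <= x.2) && (x.2 + x.1.1 + x.1.2 < k).
Definition X2 (x : I2) := [set i : 'I_k | ~~ (x.2 <= i < x.2 + x.1.1 + x.1.2)].
Definition Y2 (x : I2) := [set i : 'I_k | x.1.1 <= i].
Definition X3 (x : I2) := [set i : 'I_k | (0 < i) && ~~ (x.2 <= i < x.2 + x.1.1 + x.1.2)].
Definition Psi2 (x : I2) := (x.2 <= 7) * A2 k + (x.1.1 <= 7) * A2 k + A3 k.
Definition Psi3 (x : I2) := (k - 4 <= x.1.1) * (x.2 <= 1) * A1 k + (x.2 <= 7) * A2 k
  + (x.1.1 <= 7) * A2 k + A3 k.

Lemma class2_cover s : class2 s -> exists2 x, V2 x & s \in Nset (X2 x) (Y2 x).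
Proof.
case=> a [b [c Hw]]; have [[a0 bk c2 cba bac] H] := c2w_facts Hw.
exists ((inord c, inord (b - a - c)), inord a).
  rewrite /V2 /= !inordK; lia.
rewrite inE; apply/forallP => i; apply/implyP; rewrite /X2 /Y2 !inE /= !inordK; try lia.
have -> : a + c + (b - a - c) = b by lia.
move=> hi; case: (leqP c (s i)) => // /H; by rewrite (negbTE hi).
Qed.

Lemma class3_cover q : class3 q -> exists2 x, V2 x & q \in Nset (X3 x) (Y2 x).
Proof.
case=> x [a [b [c [r [Hw hr hmax hq]]]]]; have [[a0 bk c2 cba bac] H] := c2w_facts Hw.
exists ((inord c, inord (b - a - c)), inord a).
  rewrite /V2 /= !inordK; lia.
rewrite inE; apply/forallP => i; apply/implyP; rewrite /X3 /Y2 !inE /= !inordK; try lia.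
have -> : a + c + (b - a - c) = b by lia.
move=> /andP [i0 hi]; case: (leqP c (q i)) => // qc.
have hlt : mvrow r i < k.
  have := ltn_ord r; have := ltn_ord i; rewrite /mvrow; case: ifP => _; first lia.
  case: ifP => _; lia.
have e := hq i (Ordinal hlt) erefl.
have xc : x (Ordinal hlt) < c by rewrite -e.
have := H _ xc; rewrite /= /mvrow.
move: hr hi i0; case: (i == 0 :> nat) /eqP => [->|_] //.
case: ifP => h; lia.
Qed.

Lemma class2_term x : 16 <= k -> V2 x -> #|Nset (X2 x) (Y2 x)| * DD k <= k`! * Psi2 x.
Proof.
case: x => [[c t] a] /= hk; rewrite /V2 /= => hv; have t3 := ltn_ord t.
have cx : #|X2 (c, t, a)| = k - (a + c + t - a). rewrite card_nint /=; lia.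
have cy : #|Y2 (c, t, a)| = k - c by rewrite card_ge.
apply: leq_trans (GT _ _ _ _) _; rewrite ?cx ?cy //; try lia.
rewrite leq_mul2l /Phi /Psi2 /=; apply/orP; right.
case: ifP => [h|_]; first by exfalso; lia.
rewrite add0n -mulnDl leq_add2r; apply: if_le; lia.
Qed.

Lemma class3_term x : 16 <= k -> V2 x -> #|Nset (X3 x) (Y2 x)| * DD k <= k`! * Psi3 x.
Proof.
case: x => [[c t] a] /= hk; rewrite /V2 /= => hv; have t3 := ltn_ord t.
have cx : #|X2 (c, t, a)| = k - (a + c + t - a) by rewrite card_nint /=; lia.
have hx : #|X2 (c, t, a)| <= #|X3 (c, t, a)| + 1.
  apply: leq_trans (_ : _ <= #|X3 (c,t,a)| + #|[set i : 'I_k | i < 1]|) _; last first.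
    by rewrite card_lt //; lia.
  apply: leq_trans (leq_card_setU _ _).1; apply: subset_leq_card; apply/subsetP => i.
  by rewrite !inE; case: (posnP i) => [->|] //= _ ->.
have cy : #|Y2 (c, t, a)| = k - c by rewrite card_ge.
rewrite cx in hx.
apply: leq_trans (GT _ _ _ _) _; rewrite ?cy //; try (move: hx; move: #|X3 (c, t, a)| => n hx; lia).
rewrite leq_mul2l /Phi /Psi3 /=; apply/orP; right.
move: hx; move: #|X3 _| => p hp.
rewrite -!addnA; apply: leq_add.
  apply: if_le; rewrite muln_gt0; lia.
rewrite addnA leq_add2r -mulnDl; apply: if_le; lia.
Qed.

Lemma class2_sum : \sum_(x : I2) Psi2 x <= 30 * A1 k + 128 * (k+1) * A2 k + 3 * (k+1)^3 * A3 k.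
Proof.
rewrite /Psi2; move: (A1 k) (A2 k) (A3 k) => a1 a2 a3.
rewrite !big_split -!big_distrl /= sum3_const (sum3_c k.+1 3 (fun l : 'I_k.+1 => nat_of_bool (l <= 7))) (sum3_a 3 k.+1 (fun l : 'I_k.+1 => nat_of_bool (l <= 7))).
have sa := ind_lo k.+1 7; have sc := ind_lo k.+1 7.
move: sa sc.
set Sa := \sum_(l < k.+1) ((l <= 7) : nat) => sa sc.
have e1 : k.+1 * 3 * Sa * a2 <= (24 * (k + 1)) * a2 by apply: leq_mul => //; nia.
have e2 : Sa * 3 * k.+1 * a2 <= (24 * (k + 1)) * a2 by apply: leq_mul => //; nia.
have e3 : k.+1 * 3 * k.+1 * a3 <= (3 * (k+1)^3) * a3.
  apply: leq_mul => //; rewrite (_ : (k+1)^3 = (k+1)*(k+1)*(k+1)); last first.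
    by rewrite !expnS expn0 muln1 mulnA.
  nia.
clearbody Sa; lia.
Qed.

Lemma class3_sum : \sum_(x : I2) Psi3 x <= 30 * A1 k + 128 * (k+1) * A2 k + 3 * (k+1)^3 * A3 k.
Proof.
rewrite /Psi3; move: (A1 k) (A2 k) (A3 k) => a1 a2 a3.
rewrite !big_split -!big_distrl /= sum3_const (sum3_ac 3 (fun l : 'I_k.+1 => nat_of_bool (k - 4 <= l)) (fun l : 'I_k.+1 => nat_of_bool (l <= 1))) (sum3_c k.+1 3 (fun l : 'I_k.+1 => nat_of_bool (l <= 7))) (sum3_a 3 k.+1 (fun l : 'I_k.+1 => nat_of_bool (l <= 7))).
have sa := ind_lo k.+1 7; have sc := ind_lo k.+1 7.
have sa1 := ind_lo k.+1 1; have sc1 := ind_hi k 4.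
move: sa sc sa1 sc1.
set Sc1 := \sum_(l < k.+1) ((k - 4 <= l) : nat); set Sa1 := \sum_(l < k.+1) ((l <= 1) : nat).
set Sa := \sum_(l < k.+1) ((l <= 7) : nat) => sa sc sa1 sc1.
have e0 : Sc1 * 3 * Sa1 * a1 <= 30 * a1 by apply: leq_mul => //; nia.
have e1 : k.+1 * 3 * Sa * a2 <= (24 * (k + 1)) * a2 by apply: leq_mul => //; nia.
have e2 : Sa * 3 * k.+1 * a2 <= (24 * (k + 1)) * a2 by apply: leq_mul => //; nia.
have e3 : k.+1 * 3 * k.+1 * a3 <= (3 * (k+1)^3) * a3.
  apply: leq_mul => //; rewrite (_ : (k+1)^3 = (k+1)*(k+1)*(k+1)); last first.
    by rewrite !expnS expn0 muln1 mulnA.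
  nia.
clearbody Sa Sa1 Sc1; lia.
Qed.
End C23.

Section C4.
Variable k : nat.
Local Notation I4 := ('I_k.+1 * 'I_k.+1 * 'I_k.+1)%type.
Definition V4 (x : I4) := (1 <= x.1.1) && (x.1.1 + x.1.2 < k) && (1 <= x.2) && (x.2 + (k - x.1.2) < k).
Definition X4 (x : I4) := [set i : 'I_k | ~~ (x.1.1 <= i < x.1.1 + x.1.2)].
Definition Y4 (x : I4) := [set i : 'I_k | x.2 <= i < x.2 + (k - x.1.2)].
Definition Psi4 (x : I4) := (x.1.1 <= 7) * (k - 7 <= x.1.2) * A2 k
  + (x.1.2 <= 7) * (x.2 <= 7) * A2 k + A3 k.

Lemma class4_cover s : class4 s -> exists2 x, V4 x & s \in Nset (X4 x) (Y4 x).
Proof.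
case=> a [b [c [d [[a0 ab bk] [c0 cd dk] _ H]]]].
have hXY : forall i : 'I_k, i \in [set i : 'I_k | ~~ (a <= i < b)] -> s i \in [set j : 'I_k | c <= j < d].
  move=> i; rewrite !inE => hi; case/or4P: (H i) => /andP [h1 h2] //; lia.
have hYX : forall i : 'I_k, s i \in [set j : 'I_k | c <= j < d] -> i \in [set i : 'I_k | ~~ (a <= i < b)].
  move=> i; rewrite !inE => hi; case/or4P: (H i) => /andP [h1 h2]; lia.
have e1 := card_img_sub hXY; have e2 := card_pre_sub hYX.
rewrite card_nint ?card_int in e1 e2; try lia.
exists ((inord a, inord (b - a)), inord c).
  rewrite /V4 /= !inordK; lia.
rewrite inE; apply/forallP => i; apply/implyP; rewrite /X4 /Y4 /= !inordK; try lia.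
have -> : a + (b - a) = b by lia.
have -> : c + (k - (b - a)) = d by lia.
exact: hXY.
Qed.

Lemma class4_term x : 16 <= k -> V4 x -> #|Nset (X4 x) (Y4 x)| * DD k <= k`! * Psi4 x.
Proof.
case: x => [[a w] c] /= hk; rewrite /V4 /= => hv.
have cx : #|X4 (a, w, c)| = k - (a + w - a) by rewrite card_nint /=; lia.
have cy : #|Y4 (a, w, c)| = c + (k - w) - c by rewrite card_int /=; lia.
apply: leq_trans (GT _ _ _ _) _; rewrite ?cx ?cy //; try lia.
rewrite leq_mul2l /Phi /Psi4 /=; apply/orP; right.
case: ifP => [h|_]; first by exfalso; lia.
rewrite add0n -mulnDl leq_add2r; apply: if_le; rewrite addn_gt0 !muln_gt0; lia.
Qed.

Lemma class4_sum : \sum_(x : I4) Psi4 x <= 30 * A1 k + 128 * (k+1) * A2 k + 3 * (k+1)^3 * A3 k.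
Proof.
rewrite /Psi4; move: (A1 k) (A2 k) (A3 k) => a1 a2 a3.
rewrite !big_split -!big_distrl /= sum3_const
  (sum3_ab k.+1 (fun l : 'I_k.+1 => nat_of_bool (l <= 7)) (fun l : 'I_k.+1 => nat_of_bool (k - 7 <= l)))
  (sum3_bc k.+1 (fun l : 'I_k.+1 => nat_of_bool (l <= 7)) (fun l : 'I_k.+1 => nat_of_bool (l <= 7))).
have s1 := ind_lo k.+1 7; have s2 := ind_hi k 7.
move: s1 s2.
set S1 := \sum_(l < k.+1) ((l <= 7) : nat); set S2 := \sum_(l < k.+1) ((k - 7 <= l) : nat) => s1 s2.
have e0 : S1 * S2 <= 64 by apply: leq_trans (leq_mul s1 s2) _.
have e0' : S1 * S1 <= 64 by apply: leq_trans (leq_mul s1 s1) _.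
have e1 : S1 * S2 * k.+1 * a2 <= (64 * (k + 1)) * a2.
  by apply: leq_mul => //; have := leq_mul e0 (leqnn k.+1); lia.
have e2 : k.+1 * S1 * S1 * a2 <= (64 * (k + 1)) * a2.
  by apply: leq_mul => //; have := leq_mul (leqnn k.+1) e0'; lia.
have e3 : k.+1 * k.+1 * k.+1 * a3 <= (3 * (k+1)^3) * a3.
  apply: leq_mul => //; rewrite (_ : (k+1)^3 = (k+1)*(k+1)*(k+1)); last first.
    by rewrite !expnS expn0 muln1 mulnA.
  nia.
clearbody S1 S2; lia.
Qed.
End C4.

Definition TT k := 30 * A1 k + 128 * (k+1) * A2 k + 3 * (k+1)^3 * A3 k.

Lemma count1 k : 16 <= k -> #|[set s : {perm 'I_k} | `[< class1 s >]]| * DD k <= k`! * TT k.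
Proof.
move=> hk; apply: leq_trans (class_bound (V := @V1 k) (XX := @X1 k) (YY := @Y1 k) (Psi := @Psi1 k) _ _) _.
- by move=> s; rewrite inE => /asboolP; apply: class1_cover.
- by move=> x; apply: class1_term.
- by rewrite leq_mul2l class1_sum orbT.
Qed.

Lemma count2 k : 16 <= k -> #|[set s : {perm 'I_k} | `[< class2 s >]]| * DD k <= k`! * TT k.
Proof.
move=> hk; apply: leq_trans (class_bound (V := @V2 k) (XX := @X2 k) (YY := @Y2 k) (Psi := @Psi2 k) _ _) _.
- by move=> s; rewrite inE => /asboolP; apply: class2_cover.
- by move=> x; apply: class2_term.
- by rewrite leq_mul2l class2_sum orbT.
Qed.

Lemma count3 k : 16 <= k -> #|[set s : {perm 'I_k} | `[< class3 s >]]| * DD k <= k`! * TT k.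
Proof.
move=> hk; apply: leq_trans (class_bound (V := @V2 k) (XX := @X3 k) (YY := @Y2 k) (Psi := @Psi3 k) _ _) _.
- by move=> s; rewrite inE => /asboolP; apply: class3_cover.
- by move=> x; apply: class3_term.
- by rewrite leq_mul2l class3_sum orbT.
Qed.

Lemma count4 k : 16 <= k -> #|[set s : {perm 'I_k} | `[< class4 s >]]| * DD k <= k`! * TT k.
Proof.
move=> hk; apply: leq_trans (class_bound (V := @V4 k) (XX := @X4 k) (YY := @Y4 k) (Psi := @Psi4 k) _ _) _.
- by move=> s; rewrite inE => /asboolP; apply: class4_cover.
- by move=> x; apply: class4_term.
- by rewrite leq_mul2l class4_sum orbT.
Qed.

Lemma cancel_DD k M c : 16 <= k -> c * DD k <= k`! * TT k -> TT k * M <= DD k -> c * M <= k`!.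
Proof.
move=> hk h1 h2.
have D0 : 0 < DD k by rewrite /DD !muln_gt0 !bin_gt0; lia.
rewrite -(leq_pmul2r D0).
apply: leq_trans (_ : k`! * TT k * M <= _).
  by rewrite mulnAC leq_mul2r h1 orbT.
by rewrite -mulnA leq_mul2l h2 orbT.
Qed.

Lemma not_ord_Pbig k (s : {perm 'I_k}) : ~ ordinary s -> Pbig s.
Proof.
move=> hn.
have base : forall t, core t -> Pbig t.
  move=> t ct; exists (false, false, false); by rewrite /gsym /= mul1g mulg1.
have red : forall C : {perm 'I_k} -> Prop, (forall t, C t -> core t) -> reduces_to s C -> Pbig s.
  by move=> C hC [t [st Ct]]; apply: (sym_Pbig st); apply: base; apply: hC.
case: (pselect (reduces_to s (@class1 k))) => [h|h1]; first by apply: red h => t; left.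
case: (pselect (reduces_to s (@class2 k))) => [h|h2]; first by apply: red h => t; right; left.
case: (pselect (reduces_to s (@class3 k))) => [h|h3]; first by apply: red h => t; right; right; left.
case: (pselect (reduces_to s (@class4 k))) => [h|h4]; first by apply: red h => t; right; right; right.
by exfalso; apply: hn.
Qed.

Theorem lemma3 :
  forall m : nat, 0 < m ->
  exists K : nat, forall k : nat, K <= k ->
    m * (k`! - n_ordinary k) <= k`!.
Proof.
move=> m m0; have [K0 HK] := final_ineq (32 * m).
exists (K0 + 16) => k hk.
have hT : TT k * (32 * m) <= DD k by apply: HK; lia.
have hk16 : 16 <= k by lia.
have c1 := cancel_DD hk16 (count1 hk16) hT.
have c2 := cancel_DD hk16 (count2 hk16) hT.
have c3 := cancel_DD hk16 (count3 hk16) hT.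
have c4 := cancel_DD hk16 (count4 hk16) hT.
set S1 := [set s : {perm 'I_k} | `[< class1 s >]] in c1.
set S2 := [set s : {perm 'I_k} | `[< class2 s >]] in c2.
set S3 := [set s : {perm 'I_k} | `[< class3 s >]] in c3.
set S4 := [set s : {perm 'I_k} | `[< class4 s >]] in c4.
have hcore : #|[set s : {perm 'I_k} | `[< core s >]]| <= #|S1| + #|S2| + #|S3| + #|S4|.
  apply: leq_trans (_ : #|S1 :|: S2 :|: S3 :|: S4| <= _).
    apply: subset_leq_card; apply/subsetP => s; rewrite !inE => /asboolP.
    by case=> [h|[h|[h|h]]]; apply/orP; [left; apply/orP; left; apply/orP; left
      | left; apply/orP; left; apply/orP; right | left; apply/orP; right | right];
      apply/asboolP.
  apply: leq_trans (leq_card_setU _ _).1 _; rewrite leq_add2r.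
  apply: leq_trans (leq_card_setU _ _).1 _; rewrite leq_add2r.
  exact: (leq_card_setU _ _).1.
have hbad : k`! - n_ordinary k <= #|[set s : {perm 'I_k} | `[< Pbig s >]]|.
  rewrite /n_ordinary -card_Sn.
  have := cardsC [set s : {perm 'I_k} | `[< ordinary s >]] => <-; rewrite addKn.
  apply: subset_leq_card; apply/subsetP => s; rewrite !inE => /asboolPn hn.
  by apply/asboolP; apply: not_ord_Pbig.
have hP := card_Pbig k.
move: hbad hP hcore c1 c2 c3 c4; clearbody S1 S2 S3 S4.
move: #|[set s : {perm 'I_k} | `[< Pbig s >]]| #|[set s : {perm 'I_k} | `[< core s >]]| => nP nC.
move: #|S1| #|S2| #|S3| #|S4| (k`! - n_ordinary k) (k`!) => n1 n2 n3 n4 d F.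
nia.
Qed.
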